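(* Let $\mathcal J=(\mathcal J_0\subseteq\cdots\subseteq\mathcal J_m)$ be a positive geometric chain of ideals in $\Phi^+$ of length $m$. Then for all $\alpha,\beta\in\Phi^+$ with $\alpha+\beta\in\Phi^+$, \[ r_\alpha(\mathcal J)+r_\beta(\mathcal J)-1\le r_{\alpha+\beta}(\mathcal J)\le r_\alpha(\mathcal J)+r_\beta(\mathcal J). \]
   Context: $\Phi$ is an irreducible crystallographic root system with positive system $\Phi^+$ and simple roots $\Pi$; the root poset is $\alpha\le\beta$ iff $\beta-\alpha$ is a nonnegative combination of positive roots; ideals are down-closed subsets. A geometric chain of ideals of length $m\ge1$ is a chain of ideals $\emptyset=\mathcal J_0\subseteq\mathcal J_1\subseteq\cdots\subseteq\mathcal J_m$ with $(\mathcal J_i+\mathcal J_j)\cap\Phi^+\subseteq\mathcal J_{i+j}$ whenever $i+j\le m$ and $(\mathcal I_i+\mathcal I_j)\cap\Phi^+\subseteq\mathcal I_{i+j}$ for all $i,j\ge 0$, where $\mathcal I_i=\Phi^+\setminus\mathcal J_i$ for $i\le m$ and $\mathcal I_i=\mathcal I_m$ for $i>m$; positive means $\Pi\subseteq\mathcal J_m$. For $\alpha\in\Phi^+$, $r_\alpha(\mathcal J)=\min\{r_1+\cdots+r_k:\ \alpha=\alpha_1+\cdots+\alpha_k,\ \alpha_i\in\mathcal J_{r_i},\ 1\le r_i\le m\}$ (well defined since $\Pi\subseteq\mathcal J_m$). *)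

(* Defs.v *)
From HB Require Import structures.
From mathcomp Require Import all_boot all_order all_algebra.
From mathcomp Require Import boolp reals.
Set Implicit Arguments. Unset Strict Implicit. Unset Printing Implicit Defensive.
Import Order.TTheory GRing.Theory Num.Theory.
Local Open Scope ring_scope.

Section RootSystems.
Variables (R : realType) (n : nat).
Implicit Types (Phi Pi : seq 'rV[R]_n) (u v a b : 'rV[R]_n).

Definition dot u v : R := \sum_(i < n) u 0 i * v 0 i.

Definition refl a b : 'rV[R]_n := b - (2 * dot b a / dot a a) *: a.

Definition crystallographic_root_system Phi : Prop :=
  [/\ uniq Phi, Phi != [::], (0 : 'rV[R]_n) \notin Phi &
      (<<Phi>>%VS == fullv)] /\
  [/\
      (forall a c, a \in Phi -> c *: a \in Phi -> c = 1 \/ c = -1),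
      (forall a b, a \in Phi -> b \in Phi -> refl a b \in Phi) &
      (forall a b, a \in Phi -> b \in Phi ->
         exists z : int, 2 * dot b a / dot a a = z%:~R)].

(* irreducible: Phi is not the union of two nonempty orthogonal subsets *)
Definition irreducible Phi : Prop :=
  forall P : 'rV[R]_n -> Prop,
    (exists a, a \in Phi /\ P a) -> (exists b, b \in Phi /\ ~ P b) ->
    exists a b, [/\ a \in Phi, b \in Phi, P a, ~ P b & dot a b != 0].

Definition irreducible_crystallographic_root_system Phi : Prop :=
  crystallographic_root_system Phi /\ irreducible Phi.

Definition is_base Phi Pi : Prop :=
  [/\ {subset Pi <= Phi}, free Pi &
      forall b, b \in Phi -> exists c : 'rV[R]_n -> int,
        b = \sum_(a <- Pi) (c a)%:~R *: a /\
        ((forall a, a \in Pi -> 0 <= c a) \/ (forall a, a \in Pi -> c a <= 0))].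

Definition positive_root Phi Pi b : Prop :=
  b \in Phi /\ exists c : 'rV[R]_n -> int,
    (forall a, a \in Pi -> 0 <= c a) /\ b = \sum_(a <- Pi) (c a)%:~R *: a.

Definition root_le Phi Pi a b : Prop :=
  exists c : 'rV[R]_n -> R,
    [/\ forall g, 0 <= c g,
        forall g, c g != 0 -> positive_root Phi Pi g &
        b - a = \sum_(g <- Phi) c g *: g].

Definition ideal Phi Pi (I : 'rV[R]_n -> Prop) : Prop :=
  (forall a, I a -> positive_root Phi Pi a) /\
  (forall a b, positive_root Phi Pi a -> positive_root Phi Pi b ->
     I b -> root_le Phi Pi a b -> I a).

(* I_k = Phi^+ \ J_k for k <= m, and I_k = I_m for k > m *)
Definition Icomp Phi Pi (m : nat) (J : nat -> 'rV[R]_n -> Prop) (k : nat) a :=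
  positive_root Phi Pi a /\ ~ J (minn k m) a.

Definition geometric_chain Phi Pi (m : nat) (J : nat -> 'rV[R]_n -> Prop) : Prop :=
  (1 <= m)%N /\ [/\
      (forall a, ~ J 0%N a),
      (forall i, (i <= m)%N -> ideal Phi Pi (J i)),
      (forall i a, (i < m)%N -> J i a -> J i.+1 a),
      (forall i j a b, (i + j <= m)%N -> J i a -> J j b ->
          positive_root Phi Pi (a + b) -> J (i + j)%N (a + b)) &
      (forall i j a b, Icomp Phi Pi m J i a -> Icomp Phi Pi m J j b ->
          positive_root Phi Pi (a + b) -> Icomp Phi Pi m J (i + j) (a + b))].

Definition positive_chain Pi (m : nat) (J : nat -> 'rV[R]_n -> Prop) : Prop :=
  forall a, a \in Pi -> J m a.

(* a = a_1 + ... + a_k with a_i in J_{r_i}, 1 <= r_i <= m, and k' = sum r_i *)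
Definition rcost (m : nat) (J : nat -> 'rV[R]_n -> Prop) a (k : nat) : Prop :=
  exists s : seq ('rV[R]_n * nat),
    [/\ a = \sum_(p <- s) p.1,
        (forall p, p \in s -> (1 <= p.2 <= m)%N /\ J p.2 p.1) &
        k = (\sum_(p <- s) p.2)%N].

(* r_a(J): the minimum of such costs (0 by convention if no decomposition) *)
Definition rval (m : nat) (J : nat -> 'rV[R]_n -> Prop) a : nat :=
  match pselect (exists k, `[< rcost m J a k >]) with
  | left H => ex_minn H
  | right _ => 0%N
  end.

End RootSystems.

(* Main.v *)
Require Import Defs.
From HB Require Import structures.
From mathcomp Require Import all_boot all_order all_algebra.
From mathcomp Require Import boolp reals.
From mathcomp Require Import ring lra zify.
Import Order.TTheory GRing.Theory Num.Theory.
Set Implicit Arguments. Unset Strict Implicit.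
Local Open Scope ring_scope.

Lemma dotC (R : realType) (n : nat) (u v : 'rV[R]_n) : dot u v = dot v u.
Proof. by rewrite /dot; apply: eq_bigr => i _; rewrite mulrC. Qed.

Lemma dotDl (R : realType) (n : nat) (u v w : 'rV[R]_n) :
  dot (u + v) w = dot u w + dot v w.
Proof. by rewrite /dot -big_split; apply: eq_bigr => i _; rewrite mxE mulrDl. Qed.

Lemma dotNl (R : realType) (n : nat) (u w : 'rV[R]_n) :
  dot (- u) w = - dot u w.
Proof. by rewrite /dot -sumrN; apply: eq_bigr => i _; rewrite mxE mulNr. Qed.

Lemma dotZl (R : realType) (n : nat) (c : R) (u w : 'rV[R]_n) :
  dot (c *: u) w = c * dot u w.
Proof. by rewrite /dot mulr_sumr; apply: eq_bigr => i _; rewrite mxE mulrA. Qed.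

Lemma dot_ge0 (R : realType) (n : nat) (u : 'rV[R]_n) : 0 <= dot u u.
Proof. by rewrite /dot; apply: sumr_ge0 => i _; rewrite -expr2 sqr_ge0. Qed.

Lemma dot_eq0 (R : realType) (n : nat) (u : 'rV[R]_n) : dot u u = 0 -> u = 0.
Proof.
move=> H; apply/matrixP => i j; rewrite !mxE ord1.
have Hn : forall k : 'I_n, true -> 0 <= u 0 k * u 0 k by move=> k _; rewrite -expr2 sqr_ge0.
rewrite /dot in H; have := @psumr_eq0P _ _ xpredT _ Hn H j isT.
by move/eqP; rewrite mulf_eq0 orbb => /eqP.
Qed.

Lemma dot_gt0 (R : realType) (n : nat) (u : 'rV[R]_n) : u != 0 -> 0 < dot u u.
Proof.
move=> nz; rewrite lt_def dot_ge0 andbT; apply/eqP => /dot_eq0 H; by rewrite H eqxx in nz.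
Qed.

Lemma root_neq0 (R : realType) (n : nat) (Phi : seq 'rV[R]_n) a :
  crystallographic_root_system Phi -> a \in Phi -> a != 0.
Proof. by move=> [[_ _ H0 _] _] Ha; apply: contraNneq H0 => <-. Qed.

Lemma root_neg (R : realType) (n : nat) (Phi : seq 'rV[R]_n) a :
  crystallographic_root_system Phi -> a \in Phi -> - a \in Phi.
Proof.
move=> H Ha; have nz := root_neq0 H Ha.
case: H => _ [_ Hrefl _]; have := Hrefl a a Ha Ha; rewrite /refl.
have dz : dot a a != 0 by rewrite gt_eqF // dot_gt0.
rewrite mulfK //.
have -> : a - 2 *: a = - a.
  by rewrite -[X in X - _]scale1r -scalerBl -scaleN1r; congr (_ *: _); lra.
done.
Qed.

Lemma root_sub (R : realType) (n : nat) (Phi : seq 'rV[R]_n) a g :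
  crystallographic_root_system Phi -> a \in Phi -> g \in Phi ->
  0 < dot a g -> a != g -> a - g \in Phi.
Proof.
move=> H Ha Hg Hpos Hne.
have nza := root_neq0 H Ha; have nzg := root_neq0 H Hg.
have da := dot_gt0 nza; have dg := dot_gt0 nzg.
have H' := H; case: H' => _ [_ Hrefl Hint].
have [z1 Hz1] := Hint g a Hg Ha.
have [z2 Hz2] := Hint a g Ha Hg.
rewrite (dotC g a) in Hz2.
have z1p : 0 < z1.
  by rewrite -(ltr0z R) -Hz1; apply: divr_gt0 => //; apply: mulr_gt0.
have z2p : 0 < z2.
  by rewrite -(ltr0z R) -Hz2; apply: divr_gt0 => //; apply: mulr_gt0.
have [e1|n1] := eqVneq z1 1.
  have := Hrefl g a Hg Ha; rewrite /refl Hz1 e1 scale1r; done.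
have [e2|n2] := eqVneq z2 1.
  have := Hrefl a g Ha Hg; rewrite /refl (dotC g a) Hz2 e2 scale1r => Hga.
  by rewrite -opprB; apply: root_neg.
have h1 : 2 <= z1 by lia.
have h2 : 2 <= z2 by lia.
have r1 : 2 <= 2 * dot a g / dot g g by rewrite Hz1 (_ : 2 = 2%:~R) // ler_int.
have r2 : 2 <= 2 * dot a g / dot a a by rewrite Hz2 (_ : 2 = 2%:~R) // ler_int.
rewrite ler_pdivlMr // in r1; rewrite ler_pdivlMr // in r2.
have e : dot (a - g) (a - g) = dot a a - 2 * dot a g + dot g g.
  rewrite dotDl dotNl (dotC a (a - g)) (dotC g (a - g)) !dotDl !dotNl (dotC g a).
  ring.
have : dot (a - g) (a - g) = 0.
  apply/eqP; rewrite eq_le dot_ge0 andbT e; lra.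
move/dot_eq0/eqP; rewrite subr_eq0 => /eqP E; by rewrite E eqxx in Hne.
Qed.

Lemma pos_or_neg (R : realType) (n : nat) (Phi Pi : seq 'rV[R]_n) a :
  crystallographic_root_system Phi -> is_base Phi Pi -> a \in Phi ->
  positive_root Phi Pi a \/ positive_root Phi Pi (- a).
Proof.
move=> H [_ _ Hb] Ha; have [c [Ea [Hc|Hc]]] := Hb a Ha.
  by left; split => //; exists c.
right; split; first exact: root_neg.
exists (fun p => - c p); split; first by move=> p /Hc; lia.
rewrite Ea -sumrN; apply: eq_bigr => p _; by rewrite intrN scaleNr.
Qed.

Lemma pos_add_neq0 (R : realType) (n : nat) (Phi Pi : seq 'rV[R]_n) a b :
  crystallographic_root_system Phi -> is_base Phi Pi ->
  positive_root Phi Pi a -> positive_root Phi Pi b -> a + b != 0.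
Proof.
move=> H [_ Hfree _] [Ha [c [Hc Ea]]] [Hb [d [Hd Eb]]].
apply/eqP => Eab.
have E : \sum_(i < size Pi) ((c Pi`_i + d Pi`_i)%:~R) *: (in_tuple Pi)`_i = 0.
  transitivity (a + b); last exact: Eab.
  rewrite Ea Eb -big_split /= (big_nth 0) big_mkord.
  by apply: eq_bigr => i _; rewrite intrD scalerDl.
have := @freeP _ _ _ (in_tuple Pi); move=> /(_ Hfree) /(_ _ E) Hk.
have c0 : forall i : 'I_(size Pi), c Pi`_i = 0.
  move=> i; have := Hk i; move/eqP; rewrite intr_eq0 => /eqP e.
  have m := mem_nth 0 (ltn_ord i).
  move: (Hc _ m) (Hd _ m) => h1 h2; apply/eqP; rewrite eq_le h1 andbT -(lerD2r (d Pi`_i)) e add0r. exact: h2.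
have a0 : a = 0.
  rewrite Ea (big_nth 0) big_mkord big1 // => i _; by rewrite c0 scale0r.
have := root_neq0 H Ha; by rewrite a0 eqxx.
Qed.

Lemma rval_le (R : realType) (n : nat) m (J : nat -> 'rV[R]_n -> Prop) a k :
  rcost m J a k -> (rval m J a <= k)%N.
Proof.
move=> Hk; rewrite /rval; case: pselect => [H|H].
  by case: ex_minnP => k0 _ Hmin; apply: Hmin; apply/asboolP.
by exfalso; apply: H; exists k; apply/asboolP.
Qed.

Lemma rval_spec (R : realType) (n : nat) m (J : nat -> 'rV[R]_n -> Prop) a :
  (exists k, rcost m J a k) -> rcost m J a (rval m J a).
Proof.
move=> [k Hk]; rewrite /rval; case: pselect => [H|H].
  by case: ex_minnP => k0 /asboolP.
by exfalso; apply: H; exists k; apply/asboolP.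
Qed.

Lemma rcost_cat (R : realType) (n : nat) m (J : nat -> 'rV[R]_n -> Prop) a b k1 k2 :
  rcost m J a k1 -> rcost m J b k2 -> rcost m J (a + b) (k1 + k2).
Proof.
move=> [s1 [E1 H1 K1]] [s2 [E2 H2 K2]]; exists (s1 ++ s2); split.
- by rewrite big_cat E1 E2.
- by move=> p; rewrite mem_cat => /orP [/H1|/H2].
- by rewrite big_cat K1 K2.
Qed.

Lemma rcost_single (R : realType) (n : nat) m (J : nat -> 'rV[R]_n -> Prop) a k :
  (1 <= k <= m)%N -> J k a -> rcost m J a k.
Proof.
move=> Hk Ja; exists [:: (a, k)]; split.
- by rewrite big_seq1.
- by move=> p; rewrite inE => /eqP ->.
- by rewrite big_seq1.
Qed.

Lemma J_mono (R : realType) (n : nat) (Phi Pi : seq 'rV[R]_n) m J i j v :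
  geometric_chain Phi Pi m J -> (i <= j <= m)%N -> J i v -> J j v.
Proof.
move=> [_ [_ _ Hs _ _]]; elim: j => [|j IH].
  by rewrite leqn0 => /andP [/eqP -> _].
move=> /andP [hij hjm]; rewrite leq_eqVlt in hij; case/orP: hij => [/eqP <- //|hij] Ji.
apply: Hs => //; apply: IH => //; rewrite -ltnS hij /=; exact: ltnW.
Qed.

Lemma J_pos (R : realType) (n : nat) (Phi Pi : seq 'rV[R]_n) m J i v :
  geometric_chain Phi Pi m J -> (i <= m)%N -> J i v -> positive_root Phi Pi v.
Proof. by move=> [_ [_ Hid _ _ _]] him; case: (Hid i him) => H _; apply: H. Qed.

Lemma minlev (R : realType) (n : nat) (Phi Pi : seq 'rV[R]_n) m J k a :
  geometric_chain Phi Pi m J -> J k a ->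
  exists s, [/\ (1 <= s <= k)%N, J s a & ~ J s.-1 a].
Proof.
move=> [_ [H0 _ _ _ _]]; elim: k => [|k IH] Jk; first by case: (H0 a).
case: (pselect (J k a)) => [Jk'|nJ].
  by have [s [/andP [h1 h2] Js nJs]] := IH Jk'; exists s; split => //; rewrite h1 /=; exact: leqW.
by exists k.+1; split => //; rewrite leqnn.
Qed.

Lemma root_le_add (R : realType) (n : nat) (Phi Pi : seq 'rV[R]_n) a b :
  crystallographic_root_system Phi -> positive_root Phi Pi b ->
  root_le Phi Pi a (a + b).
Proof.
move=> [[Hu _ _ _] _] Hb.
exists (fun g => if g == b then 1 else 0); split.
- by move=> g; case: ifP.
- by move=> g; case: ifP => [/eqP -> //|]; rewrite eqxx.
- rewrite addrC addKr (bigD1_seq b) //=; last by case: Hb.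
  rewrite eqxx scale1r big1 ?addr0 // => g /negbTE ->; exact: scale0r.
Qed.

Lemma rcost_nil (R : realType) (n : nat) m (J : nat -> 'rV[R]_n -> Prop) :
  rcost m J 0 0.
Proof. by exists [::]; split => //; rewrite big_nil. Qed.

Lemma rcost_ex (R : realType) (n : nat) (Phi Pi : seq 'rV[R]_n) m J a :
  geometric_chain Phi Pi m J -> positive_chain Pi m J ->
  positive_root Phi Pi a -> exists k, rcost m J a k.
Proof.
move=> [m1 _] Hpc [_ [c [Hc ->]]].
have single : forall p, p \in Pi -> forall k : nat, exists k', rcost m J (k%:R *: p) k'.
  move=> p pP; elim=> [|k [k' IH]]; first by exists 0%N; rewrite scale0r; exact: rcost_nil.
  exists (m + k')%N; rewrite mulrS scalerDl scale1r.
  apply: rcost_cat => //; apply: rcost_single; [by rewrite m1 leqnn | exact: Hpc].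
have : {subset Pi <= Pi} by [].
elim: {-2}Pi => [|p L IH] sub; first by exists 0%N; rewrite big_nil; exact: rcost_nil.
have pP : p \in Pi by apply: sub; rewrite inE eqxx.
have [k1 H1] : exists k, rcost m J (\sum_(a <- L) (c a)%:~R *: a) k.
  by apply: IH => x hx; apply: sub; rewrite inE hx orbT.
rewrite big_cons.
have := Hc p pP; case: (c p) => // k _.
have [k2 H2] := single p pP k.
exists (k2 + k1)%N; apply: rcost_cat => //; by rewrite pmulrn.
Qed.

Lemma base_case (R : realType) (n : nat) (Phi Pi : seq 'rV[R]_n) m J k a b :
  crystallographic_root_system Phi -> geometric_chain Phi Pi m J ->
  positive_root Phi Pi a -> positive_root Phi Pi b ->
  (1 <= k <= m)%N -> J k (a + b) ->
  (rval m J a + rval m J b <= k + 1)%N.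
Proof.
move=> Hc G Ha Hb /andP [k1 km] Jx.
have G' := G; case: G' => [m1 [H0 Hid Hs Hadd Hcomp]].
have Hx := J_pos G km Jx.
have Ja : J k a by apply: (proj2 (Hid k km)) Ha Hx Jx (root_le_add a Hc Hb).
have Jb : J k b.
  apply: (proj2 (Hid k km)) Hb Hx Jx _; rewrite addrC; exact: root_le_add.
have [sa [/andP [sa1 sak] Jsa nJsa]] := minlev G Ja.
have [sb [/andP [sb1 sbk] Jsb nJsb]] := minlev G Jb.
have Ia : Icomp Phi Pi m J sa.-1 a.
  split => //; rewrite (minn_idPl _) //; lia.
have Ib : Icomp Phi Pi m J sb.-1 b.
  split => //; rewrite (minn_idPl _) //; lia.
have [_ nJx] := Hcomp _ _ _ _ Ia Ib Hx.
have hs : (sa.-1 + sb.-1 < k)%N.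
  rewrite ltnNge; apply/negP => hk; apply: nJx; apply: (J_mono (i := k)) G _ Jx.
  rewrite geq_minr andbT leq_min hk km //.
have ra := rval_le (rcost_single (m := m) (J := J) (k := sa) (a := a) _ Jsa).
have rb := rval_le (rcost_single (m := m) (J := J) (k := sb) (a := b) _ Jsb).
have : (rval m J a <= sa)%N by apply: ra; lia.
have : (rval m J b <= sb)%N by apply: rb; lia.
lia.
Qed.

Lemma dot_suml (R : realType) (n : nat) (s : seq ('rV[R]_n * nat)) x :
  dot (\sum_(p <- s) p.1) x = \sum_(p <- s) dot p.1 x.
Proof.
elim: s => [|p s IH]; last by rewrite !big_cons dotDl IH.
rewrite !big_nil /dot big1 // => i _; by rewrite mxE mul0r.
Qed.

Lemma mainG (R : realType) (n : nat) (Phi Pi : seq 'rV[R]_n) m J :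
  crystallographic_root_system Phi -> is_base Phi Pi ->
  geometric_chain Phi Pi m J -> positive_chain Pi m J ->
  forall t (s : seq ('rV[R]_n * nat)), size s = t.+1 ->
  (forall p, p \in s -> (1 <= p.2 <= m)%N /\ J p.2 p.1) ->
  forall a b, positive_root Phi Pi a -> positive_root Phi Pi b ->
  a + b = \sum_(p <- s) p.1 ->
  (rval m J a + rval m J b <= \sum_(p <- s) p.2 + 1)%N.
Proof.
move=> Hc Hb G Hpc; elim=> [|t IH] s Hsz Hs a b Ha Hbb E.
  case: s Hsz Hs E => [|p [|q s]] // _ Hs E.
  rewrite big_seq1 in E; rewrite big_seq1.
  have [hp Jp] := Hs p (mem_head _ _).
  by apply: base_case Hc G Ha Hbb hp _; rewrite E.
set x := a + b in E.
have xnz : x != 0 by apply: pos_add_neq0 Hc Hb Ha Hbb.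
have : has (fun p => 0 < dot p.1 x) s.
  apply/negPn/negP => /hasPn Hn.
  have : dot x x <= 0.
    rewrite {1}E dot_suml big_seq.
    apply: (@le_trans _ _ (\sum_(p <- s | p \in s) (0 : R))); last by rewrite big1.
    by apply: ler_sum => p /Hn; rewrite -leNgt.
  by rewrite leNgt dot_gt0.
case/hasP => p pin Hpx.
have [hp Jp] := Hs p pin.
set g := p.1 in Hpx Jp; set k := p.2 in hp Jp.
set rest := rem p s.
have Hperm := perm_to_rem pin.
have Srest : forall F : _ -> nat, (\sum_(q <- s) F q = F p + \sum_(q <- rest) F q)%N.
  by move=> F; rewrite (perm_big _ Hperm) big_cons.
have Svec : \sum_(q <- s) q.1 = g + \sum_(q <- rest) q.1.
  by rewrite (perm_big _ Hperm) big_cons.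
have szr : size rest = t.+1 by rewrite /rest size_rem // Hsz.
have Hsr : forall q, q \in rest -> (1 <= q.2 <= m)%N /\ J q.2 q.1.
  by move=> q /mem_rem; apply: Hs.
have Hrest : rcost m J (\sum_(q <- rest) q.1) (\sum_(q <- rest) q.2) by exists rest.
have kk : (1 <= k <= m)%N by [].
have Jg : J k g by [].
have gpos := J_pos G (proj2 (andP kk)) Jg.
have gphi : g \in Phi by case: gpos.
rewrite Srest -/k.
set S := \sum_(q <- rest) q.1 in Svec Hrest.
set K := (\sum_(q <- rest) q.2)%N in Hrest *.
have key : forall a b, positive_root Phi Pi a -> positive_root Phi Pi b ->
    a + b = g + S -> 0 < dot a g -> (rval m J a + rval m J b <= k + K + 1)%N.
  move=> a1 b1 Ha1 Hb1 E1 Hd.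
  have aphi : a1 \in Phi by case: Ha1.
  have ra_g : forall a', rcost m J a' (rval m J a') ->
      (rval m J (a' + g) <= rval m J a' + k)%N.
    by move=> a' H'; apply: rval_le; apply: rcost_cat => //; apply: rcost_single.
  have [eag|nag] := eqVneq a1 g.
    have eb : b1 = S by apply: (addrI a1); rewrite E1 eag.
    have := rval_le (rcost_single kk Jg); have := rval_le Hrest.
    rewrite eag eb; lia.
  have a'phi := root_sub Hc aphi gphi Hd nag.
  case: (pos_or_neg Hc Hb a'phi) => Hpa'.
    have E2 : (a1 - g) + b1 = S.
      by rewrite addrAC E1 addrC addKr.
    have IHr := IH rest szr Hsr _ _ Hpa' Hb1 E2.
    have := ra_g _ (rval_spec (rcost_ex G Hpc Hpa')).
    rewrite subrK; rewrite -/K in IHr; lia.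
  rewrite opprB in Hpa'.
  have E3 : a1 + (g - a1) = g by rewrite addrC subrK.
  have Jg' : J k (a1 + (g - a1)) by rewrite E3.
  have bc := base_case Hc G Ha1 Hpa' kk Jg'.
  have eb : b1 = (g - a1) + S.
    by apply: (addrI a1); rewrite E1 addrA E3.
  have := rval_le (rcost_cat (rval_spec (rcost_ex G Hpc Hpa')) Hrest).
  rewrite -eb; lia.
have : 0 < dot a g + dot b g.
  by rewrite -dotDl dotC.
case: (ltrP 0 (dot a g)) => Hag Hsum.
  exact: key Ha Hbb (etrans (erefl _) (etrans E Svec)) Hag.
have Hbg : 0 < dot b g by lra.
rewrite addnC; apply: key Hbb Ha _ Hbg; by rewrite addrC -Svec.
Qed.

Theorem corollary3p4 (R : realType) (n : nat) (Phi Pi : seq 'rV[R]_n)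
    (m : nat) (J : nat -> 'rV[R]_n -> Prop) :
  irreducible_crystallographic_root_system Phi ->
  is_base Phi Pi ->
  geometric_chain Phi Pi m J ->
  positive_chain Pi m J ->
  forall a b : 'rV[R]_n,
    positive_root Phi Pi a -> positive_root Phi Pi b ->
    positive_root Phi Pi (a + b) ->
    (rval m J a + rval m J b - 1 <= rval m J (a + b) <= rval m J a + rval m J b)%N.
Proof.
move=> [Hc _] Hb G Hpc a b Ha Hbb Hab.
have up : (rval m J (a + b) <= rval m J a + rval m J b)%N.
  apply: rval_le; apply: rcost_cat; apply: rval_spec; exact: rcost_ex G Hpc _.
rewrite up andbT.
have [s [E Hs K]] := rval_spec (rcost_ex G Hpc Hab).
case: s E Hs K => [|p s] E Hs K.
  by move: (pos_add_neq0 Hc Hb Ha Hbb); rewrite E big_nil eqxx.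
have := mainG Hc Hb G Hpc (erefl (size (p :: s))) Hs Ha Hbb E.
rewrite -K; lia.
Qed.
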